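(* Let $\Gamma$ be a nontrivial standard graph with minimal edge length $L_{\min}$. Let $f$ be a Morse eigenfunction of $\Gamma$ with eigenvalue $k>\frac{\pi}{L_{\min}}$, and let $\Omega$ be a Neumann domain of $f$. (1) If $\Omega$ contains a vertex $v$ of $\Gamma$ of degree $d_v>2$, then $\Omega$ is a star graph with $d_v$ edges. (2) If $\Omega$ contains no vertex of $\Gamma$ of degree greater than $2$, then $\Omega$ is a path graph (a single interval) of length $\frac{\pi}{k}$.
   Context: A metric graph is a finite connected graph $\Gamma=(\mathcal{V},\mathcal{E})$ (loops allowed) in which each edge $e$ is identified with an interval $[0,L_e]$, $L_e>0$; $d_v$ denotes the degree of vertex $v$. The Laplacian acts as $f|_e\mapsto-\frac{d^2}{dx_e^2}f|_e$ on functions in $\bigoplus_e H^2([0,L_e])$ satisfying Neumann vertex conditions at every vertex: continuity and vanishing sum of outgoing derivatives. Such a graph is standard; it is assumed to have no vertices of degree two, and it is nontrivial if it is not a single loop. Eigenvalues are written $k^2$, $k\ge0$, and $k$ is called the eigenvalue. An eigenfunction is Morse if on each edge no interior point has both $f'$ and $f''$ vanishing. A Neumann point of a Morse eigenfunction is a local extremum of $f$ that is not a vertex of degree one; a Neumann domain is the closure of a connected component of $\Gamma$ minus the Neumann points, obtained by adding a degree-one vertex at each open endpoint. A star graph is a tree with one interior vertex joined by edges to all other vertices, which have degree one; a path graph here is a graph consisting of a single edge between two vertices. *)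

(* Defs.v *)
From HB Require Import structures.
From mathcomp Require Import all_boot all_order all_algebra.
From mathcomp Require Import all_classical all_reals all_analysis.
Set Implicit Arguments. Unset Strict Implicit. Unset Printing Implicit Defensive.
Import Order.TTheory GRing.Theory Num.Theory.
Local Open Scope ring_scope.
Local Open Scope classical_set_scope.

(* A finite graph (loops and multiple edges allowed); edge e goes from
   [src e] to [tgt e] and is identified with [0, len e]. *)
Record metric_graph (R : realType) := MetricGraph {
  vert : finType;
  edge : finType;
  src : edge -> vert;
  tgt : edge -> vert;
  len : edge -> R }.

Section MG.
Variable R : realType.
Variable G : metric_graph R.
Local Notation V := (vert G).
Local Notation E := (edge G).
Local Notation src := (@src R G).
Local Notation tgt := (@tgt R G).
Local Notation len := (@len R G).

(* half-edges: (e,true) is the start of e (at src e), (e,false) its end *)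
Definition half_at (v : V) (h : E * bool) : bool :=
  if h.2 then src h.1 == v else tgt h.1 == v.

(* degree, loops counted twice *)
Definition deg (v : V) : nat := #|[set h : E * bool | half_at v h]|.

Definition adj (u w : V) : bool :=
  [exists e : E, ((src e == u) && (tgt e == w)) || ((src e == w) && (tgt e == u))].

Definition graph_connected : Prop := forall u w : V, connect adj u w.

Definition single_loop : Prop :=
  #|V| = 1%N /\ #|E| = 1%N /\ (forall e : E, src e = tgt e).

Definition standard_nontrivial : Prop :=
  (forall e, 0 < len e) /\ graph_connected /\ (forall v, deg v <> 2%N) /\ ~ single_loop.

Definition Lmin : R := inf (range len).

(* points of the metric graph: pairs (e, x) with 0 <= x <= len e *)
Definition valid (p : E * R) : Prop := 0 <= p.2 <= len p.1.

Definition pvert (p : E * R) : option V :=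
  if p.2 == 0 then Some (src p.1)
  else if p.2 == len p.1 then Some (tgt p.1) else None.

(* two pairs denote the same point of the metric graph *)
Definition peq (p q : E * R) : Prop :=
  valid p /\ valid q /\ (p = q \/ exists v, pvert p = Some v /\ pvert q = Some v).

Definition pball (p : E * R) (eps : R) (q : E * R) : Prop :=
  exists (e : E) (x y : R), peq p (e, x) /\ peq q (e, y) /\ `|y - x| < eps.

(* a function on the graph is given edgewise, f e : R -> R, used on [0, len e] *)
Variable f : E -> R -> R.
Definition fval (p : E * R) : R := f p.1 p.2.

Definition outder (h : E * bool) : R :=
  if h.2 then derive1 (f h.1) 0 else - derive1 (f h.1) (len h.1).

Definition eigenfunction (k : R) : Prop :=
  0 <= k /\
  (exists p, valid p /\ fval p != 0) /\
  (forall e x, derivable (f e) x 1 /\ derivable (derive1 (f e)) x 1 /\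
               derive1 (derive1 (f e)) x = - k ^+ 2 * f e x) /\
  (forall p q, peq p q -> fval p = fval q) /\
  (forall v : V, \sum_(h : E * bool | half_at v h) outder h = 0).

Definition morse : Prop :=
  forall e x, 0 < x < len e -> ~ (derive1 (f e) x = 0 /\ derive1 (derive1 (f e)) x = 0).

Definition local_max (p : E * R) : Prop :=
  valid p /\ exists eps : R, 0 < eps /\ forall q, pball p eps q -> fval q <= fval p.
Definition local_min (p : E * R) : Prop :=
  valid p /\ exists eps : R, 0 < eps /\ forall q, pball p eps q -> fval p <= fval q.

Definition deg1_vertex_pt (p : E * R) : Prop :=
  valid p /\ exists v, pvert p = Some v /\ deg v = 1%N.

Definition neumann_pt (p : E * R) : Prop :=
  (local_max p \/ local_min p) /\ ~ deg1_vertex_pt p.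

Definition off_neumann (p : E * R) : Prop := valid p /\ ~ neumann_pt p.

Inductive pconn (S : E * R -> Prop) : E * R -> E * R -> Prop :=
| pconn_seg e x y :
    (forall z, Num.min x y <= z <= Num.max x y -> S (e, z)) -> pconn S (e, x) (e, y)
| pconn_peq p q : S p -> peq p q -> pconn S p q
| pconn_trans p q r : pconn S p q -> pconn S q r -> pconn S p r.

(* C is a connected component of Gamma minus the Neumann points; the Neumann
   domain is obtained from C by closing it with a degree-one vertex at each
   open endpoint. *)
Definition neumann_component (C : E * R -> Prop) : Prop :=
  (exists p, C p) /\ forall p, C p -> forall q, C q <-> pconn off_neumann p q.

Definition hpt (h : E * bool) (t : R) : E * R :=
  if h.2 then (h.1, t) else (h.1, len h.1 - t).

Definition contains_vertex (C : E * R -> Prop) (v : V) : Prop :=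
  exists p, C p /\ valid p /\ pvert p = Some v.

(* The Neumann domain of C is a star graph centred at v with deg v edges:
   C consists of v and, for each half-edge h at v, the initial segment of h of
   length l h > 0, whose far end is a Neumann point (open end of C) or a
   degree-one vertex of Gamma; the segments of the two half-edges of a loop
   do not overlap. *)
Definition star_domain (C : E * R -> Prop) (v : V) : Prop :=
  exists l : E * bool -> R,
    (forall h, half_at v h ->
       0 < l h <= len h.1 /\
       (forall t, 0 < t < l h -> ~ neumann_pt (hpt h t)) /\
       (neumann_pt (hpt h (l h)) \/ deg1_vertex_pt (hpt h (l h)))) /\
    (forall e, src e = v -> tgt e = v -> l (e, true) + l (e, false) <= len e) /\
    (forall q, C q <->
       ((valid q /\ pvert q = Some v) \/
        exists h t, half_at v h /\ 0 < t <= l h /\ peq q (hpt h t) /\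
                    ~ neumann_pt (hpt h t))).

Definition path_domain (C : E * R -> Prop) (ell : R) : Prop :=
  exists (e : E) (a b : R),
    0 <= a /\ a < b /\ b <= len e /\ b - a = ell /\
    (neumann_pt (e, a) \/ deg1_vertex_pt (e, a)) /\
    (neumann_pt (e, b) \/ deg1_vertex_pt (e, b)) /\
    (forall y, a < y < b -> ~ neumann_pt (e, y)) /\
    (forall q, C q <-> exists y, a <= y <= b /\ peq q (e, y) /\ ~ neumann_pt (e, y)).

End MG.

(* Main.v *)
Require Import Defs.
From HB Require Import structures.
From mathcomp Require Import all_boot all_order all_algebra.
From mathcomp Require Import all_classical all_reals all_analysis.
From mathcomp Require Import ring lra.
Import Order.TTheory GRing.Theory Num.Theory.
Import numFieldNormedType.Exports.
Set Implicit Arguments. Unset Strict Implicit. Unset Printing Implicit Defensive.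
Local Open Scope ring_scope.
Section ODE.
Variables (R : realType) (k : R) (u : R -> R).
Hypothesis kgt0 : 0 < k.
Hypothesis Hu : forall x, derivable u x 1 /\ derivable (derive1 u) x 1 /\
   derive1 (derive1 u) x = - k ^+ 2 * u x.
Lemma lin_der x0 (x : R) : is_derive x (1:R) (fun y : R => k * (y - x0)) k.
Proof.
have H1 := @is_deriveB R R R id (cst x0) x 1 1 0 (is_derive_id _ _) (is_derive_cst _ _ _).
have H := @is_deriveZ R R R _ k x 1 _ H1.
have -> : (fun y : R => k * (y - x0)) = k \*: (id - cst x0) by [].
apply: is_derive_eq H _.
by rewrite subr0 /GRing.scale /= mulr1.
Qed.
Lemma sin_der x0 (x : R) : is_derive x (1:R) (fun y : R => sin (k * (y - x0))) (cos (k * (x - x0)) * k).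
Proof.
exact: (@is_derive1_comp R sin (fun y : R => k * (y - x0)) x _ _ (is_derive_sin _) (lin_der x0 x)).
Qed.
Lemma cos_der x0 (x : R) : is_derive x (1:R) (fun y : R => cos (k * (y - x0))) (- sin (k * (x - x0)) * k).
Proof.
exact: (@is_derive1_comp R cos (fun y : R => k * (y - x0)) x _ _ (is_derive_cos _) (lin_der x0 x)).
Qed.
Lemma du (x : R) : is_derive x (1:R) u (derive1 u x).
Proof. rewrite derive1E; apply: derivableP; exact: (Hu x).1. Qed.
Lemma du' (x : R) : is_derive x (1:R) (derive1 u) (- k ^+ 2 * u x).
Proof. rewrite -(Hu x).2.2 derive1E; apply: derivableP; exact: (Hu x).2.1. Qed.

Lemma ode_formula x0 x : u x = u x0 * cos (k * (x - x0)) + derive1 u x0 / k * sin (k * (x - x0)).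
Proof.
have k0 : k != 0 by rewrite gt_eqF.
pose C := fun y : R => cos (k * (y - x0)).
pose S := fun y : R => sin (k * (y - x0)).
pose P := u * C - k^-1 \*: (derive1 u * S).
pose Q := u * S + k^-1 \*: (derive1 u * C).
have dP y : is_derive y (1:R) P 0.
  have h1 := is_deriveM (du y) (cos_der x0 y).
  have h2 := is_deriveZ k^-1 (is_deriveM (du' y) (sin_der x0 y)).
  apply: is_derive_eq (is_deriveB h1 h2) _.
  rewrite /GRing.scale /= /C /S.
  move: (u y) (derive1 u y) (cos _) (sin _) => a b c d /=. field. by [].
have dQ y : is_derive y (1:R) Q 0.
  have h1 := is_deriveM (du y) (sin_der x0 y).
  have h2 := is_deriveZ k^-1 (is_deriveM (du' y) (cos_der x0 y)).
  apply: is_derive_eq (is_deriveD h1 h2) _.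
  rewrite /GRing.scale /= /C /S.
  move: (u y) (derive1 u y) (cos _) (sin _) => a b c d /=. field. by [].
have Pv y : P y = u y * C y - k^-1 * (derive1 u y * S y) by [].
have Qv y : Q y = u y * S y + k^-1 * (derive1 u y * C y) by [].
have eP := is_derive_0_is_cst x x0 dP.
have eQ := is_derive_0_is_cst x x0 dQ.
rewrite !Pv in eP; rewrite !Qv in eQ.
have h := cos2Dsin2 (k * (x - x0)).
move: eP eQ h; rewrite /C /S subrr mulr0 cos0 sin0.
move: (u x) (derive1 u x) (cos _) (sin _) => a b c d eP eQ h.
rewrite -[a]mulr1 -h.
have -> : u x0 = a * c - k^-1 * (b * d) by rewrite eP; field.
have -> : derive1 u x0 / k = a * d + k^-1 * (b * c) by rewrite eQ; field.
by field.
Qed.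
Lemma ode_der : forall x, derivable (derive1 u) x 1 /\ derivable (derive1 (derive1 u)) x 1 /\
   derive1 (derive1 (derive1 u)) x = - k ^+ 2 * derive1 u x.
Proof.
have E : derive1 (derive1 u) = (- k^+2) \*: u by apply/funext => y; rewrite (Hu y).2.2.
move=> x; split; first exact (Hu x).2.1.
have D := is_deriveZ (-k^+2) (du x).
rewrite E; split; first by case: D.
by rewrite derive1E derive_val /GRing.scale /=.
Qed.
End ODE.

Section Zeros.
Variable R : realType.
Lemma first_zero (H : R -> R) (c : R) : 0 < c -> continuous H ->
  (forall x, H (x + c) = - H x) ->
  (forall a b, H a = 0 -> H b = 0 -> a != b -> c <= `|a - b|) ->
  forall x0, exists l, [/\ 0 < l <= c, H (x0 + l) = 0 &
      forall t, 0 < t < l -> H (x0 + t) != 0].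
Proof.
move=> c0 cH anti gap x0.
case: (eqVneq (H x0) 0) => h0.
  exists c; split.
  - by rewrite c0 lexx.
  - by rewrite anti h0 oppr0.
  - move=> t /andP[t0 tc]; apply/eqP => ht.
    have := gap _ _ ht h0.
    rewrite addrAC subrr add0r gtr0_norm // leNgt tc.
    have -> : x0 + t != x0 by rewrite -subr_eq0 addrAC subrr add0r gt_eqF.
    by move=> /(_ isT).
have [z zin Hz] : exists2 z, z \in `[x0, x0 + c] & H z = 0.
  apply: IVT.
  - by rewrite lerDl ltW.
  - exact: continuous_subspaceT.
  - rewrite anti ge_min le_max oppr_le0 oppr_ge0.
    by case: (leP 0 (H x0)) => h; rewrite ?lexx ?orbT //= ltW.
have zx0 : z != x0 by apply: contra_neq h0 => <-.
move: zin; rewrite in_itv /= => /andP[z1 z2].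
exists (z - x0); split.
- rewrite subr_gt0 lt_def zx0 z1 /=. by rewrite lerBlDl.
- by rewrite addrC subrK.
- move=> t /andP[t0 tl]; apply/eqP => ht.
  have neq : x0 + t != z by apply/eqP => e; move: tl; rewrite -e addrAC subrr add0r ltxx.
  have := gap _ _ ht Hz neq.
  rewrite ler0_norm; last by rewrite subr_le0 -lerBrDl ltW.
  rewrite opprB leNgt.
  have -> : z - (x0 + t) < c by rewrite opprD addrA; apply: (lt_le_trans _ (_ : z - x0 <= c)); [rewrite ltrBlDr ltrDl | rewrite lerBlDl].
  by [].
Qed.
End Zeros.

Section Edge.
Variables (R : realType) (k : R) (u : R -> R).
Hypothesis kgt0 : 0 < k.
Hypothesis Hu : forall x, derivable u x 1 /\ derivable (derive1 u) x 1 /\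
   derive1 (derive1 u) x = - k ^+ 2 * u x.
Hypothesis ND : forall x, ~ (u x = 0 /\ derive1 u x = 0).
Let c := pi / k.
Let c0 : 0 < c. Proof. by rewrite divr_gt0 // pi_gt0. Qed.
Let kc : k * c = pi. Proof. by rewrite /c mulrC divfK // gt_eqF. Qed.

Lemma u'_cont : continuous (derive1 u).
Proof.
move=> x; apply: differentiable_continuous; apply/derivable1_diffP; exact: (Hu x).2.1.
Qed.

Lemma u'_formula a x : derivable u x 1 -> derive1 u x = - k * u a * sin (k * (x - a)) + derive1 u a * cos (k * (x - a)).
Proof.
move=> _.
rewrite (ode_formula kgt0 (ode_der Hu) a x) (Hu a).2.2.
have k0 : k != 0 by rewrite gt_eqF.
move: (u a) (derive1 u a) (sin _) (cos _) => p q s co. by field.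
Qed.

Lemma u'_anti x : derive1 u (x + c) = - derive1 u x.
Proof.
rewrite (u'_formula x (Hu _).1) addrAC subrr add0r kc sinpi cospi. 
by rewrite mulr0 add0r mulrN1.
Qed.

Lemma u'_gap a b : derive1 u a = 0 -> derive1 u b = 0 -> a != b -> c <= `|a - b|.
Proof.
move=> ha hb ab; rewrite leNgt; apply/negP => lt.
move: hb; rewrite (u'_formula a (Hu _).1) ha mul0r addr0 => /eqP.
rewrite !mulf_eq0 oppr_eq0 (gt_eqF kgt0) /=.
have ua : u a != 0 by apply/eqP => ua; exact: (ND (conj ua ha)).
rewrite (negbTE ua) /=.
have kl : `|k * (b - a)| < pi by rewrite normrM gtr0_norm // -kc ltr_pM2l // distrC.
case: (ltgtP a b) => [lab|lba|eab]; last by move: ab; rewrite eab eqxx.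
- rewrite gt_eqF //; apply: sin_gt0_pi; rewrite mulr_gt0 ?subr_gt0 //=.
  by move: kl; rewrite gtr0_norm // mulr_gt0 ?subr_gt0.
- rewrite -oppr_eq0 -sinN -mulrN opprB gt_eqF //; apply: sin_gt0_pi; rewrite mulr_gt0 ?subr_gt0 //=.
  by move: kl; rewrite -normrN -mulrN opprB gtr0_norm // mulr_gt0 ?subr_gt0.
Qed.

Lemma u'_fwd x0 : exists l, [/\ 0 < l <= c, derive1 u (x0 + l) = 0 &
      forall t, 0 < t < l -> derive1 u (x0 + t) != 0].
Proof. exact: first_zero c0 u'_cont u'_anti u'_gap x0. Qed.

Lemma u'_bwd x0 : exists l, [/\ 0 < l <= c, derive1 u (x0 - l) = 0 &
      forall t, 0 < t < l -> derive1 u (x0 - t) != 0].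
Proof.
pose H := fun x => derive1 u (- x).
have cH : continuous H.
  move=> x; apply: continuous_comp; first exact: oppr_continuous.
  exact: u'_cont.
have aH x : H (x + c) = - H x.
  rewrite /H; have -> : - x = - (x + c) + c by rewrite opprD addrNK.
  by rewrite u'_anti opprK.
have gH a b : H a = 0 -> H b = 0 -> a != b -> c <= `|a - b|.
  move=> ha hb ab.
  have -> : a - b = - ((- a) - (- b)) by rewrite opprB opprK addrC.
  rewrite normrN; apply: u'_gap ha hb _; by rewrite eqr_opp.
have [l [l0 hl nz]] := first_zero c0 cH aH gH (- x0).
exists l; split => //.
- by move: hl; rewrite /H opprD opprK.
- by move=> t /nz; rewrite /H opprD opprK.
Qed.

Lemma u'_next a : derive1 u a = 0 -> derive1 u (a + c) = 0 /\
   forall t, 0 < t < c -> derive1 u (a + t) != 0.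
Proof.
move=> ha; split; first by rewrite u'_anti ha oppr0.
move=> t /andP[t0 tc]; apply/eqP => h.
have := u'_gap ha h.
rewrite opprD addrA subrr sub0r normrN gtr0_norm // leNgt tc.
have -> : a != a + t by rewrite eq_sym -subr_eq0 addrAC subrr add0r gt_eqF.
by move=> /(_ isT).
Qed.

Lemma u_ext a : derive1 u a = 0 -> forall y, u y = u a * cos (k * (y - a)).
Proof.
by move=> ha y; rewrite (ode_formula kgt0 Hu a y) ha mul0r mul0r addr0.
Qed.

End Edge.

Lemma exmin (R : realType) (T : finType) (F : T -> R) (t0 : T) : exists t, forall s, F t <= F s.
Proof.
case: (@Order.TotalTheory.arg_minP _ _ T t0 xpredT F isT) => t _ H.
exists t => s; exact: H.
Qed.

Lemma betw_ne (R : realType) (x1 y z lo hi : R) : lo < x1 < hi -> lo <= y <= hi ->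
  Num.min x1 y <= z <= Num.max x1 y -> z != y -> lo < z < hi.
Proof.
move=> /andP[a b] /andP[c d]; rewrite ge_min le_max neq_lt.
by move=> /andP[/orP[z1|z1] /orP[z2|z2]] /orP[zy|zy]; apply/andP; split; lra.
Qed.

Section OneSided.
Variable R : realType.
Lemma der_right_max (g : R -> R) x d : 0 < d -> derivable g x 1 ->
  (forall y, x < y < x + d -> g y <= g x) -> derive1 g x <= 0.
Proof.
move=> d0 dg cmax; rewrite derive1E.
rewrite ['D_1 g x]cvg_at_rightE; last exact: dg.
apply: limr_le.
  rewrite -(cvg_at_rightE (fun h : R => h^-1 *: ((g \o shift x) _ - g x))) //.
  apply: cvg_trans dg; apply: cvg_app.
  move=> A [e egt0 Ae]; exists e => // y ye ygt0; apply: Ae => //.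
  exact/lt0r_neq0.
near=> h; apply: mulr_ge0_le0.
  by rewrite invr_ge0; apply: ltW; near: h; exists 1 => /=.
rewrite subr_le0 [_%:A]mulr1; apply: cmax; near: h.
exists d => // h; rewrite /= distrC subr0 => hd h0.
rewrite ltrDr h0 /= addrC ltrD2l.
exact: le_lt_trans (ler_norm _) hd.
Unshelve. all: by end_near. Qed.

Lemma der_left_max (g : R -> R) x d : 0 < d -> derivable g x 1 ->
  (forall y, x - d < y < x -> g y <= g x) -> 0 <= derive1 g x.
Proof.
move=> d0 dg cmax; rewrite derive1E.
rewrite ['D_1 g x]cvg_at_leftE; last exact: dg.
apply: limr_ge.
  rewrite -(cvg_at_leftE (fun h : R => h^-1 *: ((g \o shift x) _ - g x))) //.
  apply: cvg_trans dg; apply: cvg_app.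
  move=> A [e egt0 Ae]; exists e => // y ye ygt0; apply: Ae => //.
  exact/ltr0_neq0.
near=> h; apply: mulr_le0.
  by rewrite invr_le0; apply: ltW; near: h; exists 1 => /=.
rewrite subr_le0 [_%:A]mulr1; apply: cmax; near: h.
exists d => // h; rewrite /= distrC subr0 => hd h0.
rewrite gtrDr h0 andbT addrC ltrD2r.
move: hd => /ltr_normlP [] hd _. by rewrite -ltrNl.
Unshelve. all: by end_near. Qed.

Lemma der_right_min (g : R -> R) x d : 0 < d -> derivable g x 1 ->
  (forall y, x < y < x + d -> g x <= g y) -> 0 <= derive1 g x.
Proof.
move=> d0 dg cmin.
have := @der_right_max (- g) x d d0 (derivableN dg).
rewrite derive1N // oppr_le0; apply => y /cmin; by rewrite /= lerN2.
Qed.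

Lemma der_left_min (g : R -> R) x d : 0 < d -> derivable g x 1 ->
  (forall y, x - d < y < x -> g x <= g y) -> derive1 g x <= 0.
Proof.
move=> d0 dg cmin.
have := @der_left_max (- g) x d d0 (derivableN dg).
rewrite derive1N // oppr_ge0; apply => y /cmin; by rewrite /= lerN2.
Qed.
End OneSided.

Section Graph.
Variables (R : realType) (G : metric_graph R) (f : edge G -> R -> R) (k : R).
Hypothesis Hstd : standard_nontrivial G.
Hypothesis Heig : eigenfunction f k.
Hypothesis Hmorse : morse f.
Hypothesis Hk : pi / Lmin G < k.

Local Notation E := (edge G).
Local Notation V := (vert G).
Local Notation L := (@len R G).
Local Notation h e := (derive1 (f e)).

Lemma Lpos (e : E) : 0 < L e. Proof. by case: Hstd => H _; apply: H. Qed.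

Lemma F_ode (e : E) : forall x, derivable (f e) x 1 /\ derivable (derive1 (f e)) x 1 /\
   derive1 (derive1 (f e)) x = - k ^+ 2 * f e x.
Proof. by case: Heig => _ [_ [H _]]; apply: H. Qed.

Lemma F_cont p q : peq p q -> fval f p = fval f q.
Proof. by case: Heig => _ [_ [_ [H _]]]; apply: H. Qed.

Lemma F_kir v : \sum_(hh | half_at v hh) outder f hh = 0.
Proof. by case: Heig => _ [_ [_ [_ H]]]; apply: H. Qed.

Lemma someE : exists e : E, True.
Proof. by case: Heig => _ [[[e _] _] _]; exists e. Qed.

Lemma Lmin_le (e : E) : Lmin G <= L e.
Proof.
apply: ge_inf; last by exists e.
by exists 0 => _ [e' _ <-]; apply: ltW; apply: Lpos.
Qed.

Lemma Lmin_pos : 0 < Lmin G.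
Proof.
have [e0 _] := someE.
have [em Hm] := exmin L e0.
apply: (lt_le_trans (Lpos em)); apply: lb_le_inf; first by exists (L em), em.
by move=> _ [e' _ <-]; apply: Hm.
Qed.

Lemma kpos : 0 < k.
Proof. apply: lt_trans Hk; by rewrite divr_gt0 ?pi_gt0 ?Lmin_pos. Qed.

Lemma c_lt (e : E) : pi / k < L e.
Proof.
apply: (lt_le_trans _ (Lmin_le e)).
have := Hk; rewrite ltr_pdivrMr ?Lmin_pos // => H.
by rewrite ltr_pdivrMr ?kpos // mulrC.
Qed.

Lemma c_pos : 0 < pi / k.
Proof. by rewrite divr_gt0 ?pi_gt0 ?kpos. Qed.

Lemma ND (e : E) : forall x, ~ (f e x = 0 /\ h e x = 0).
Proof.
move=> x [fx hx].
have Z : f e = cst 0.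
  apply/funext => y; rewrite (u_ext kpos (F_ode e) hx y) fx mul0r //.
have l0 := Lpos e.
have mid : 0 < L e / 2 < L e by apply/andP; split; lra.
apply: (Hmorse mid); split.
  by rewrite Z derive1_cst.
by rewrite (F_ode e _).2.2 Z /= mulr0.
Qed.

Lemma pv_int (e : E) x : 0 < x < L e -> pvert (e, x) = None.
Proof.
move=> /andP[x0 xl]; rewrite /pvert /= gt_eqF // lt_eqF //.
Qed.

Lemma pv0 (e : E) : pvert (e, 0) = Some (src e).
Proof. by rewrite /pvert /= eqxx. Qed.

Lemma pvL (e : E) : pvert (e, L e) = Some (tgt e).
Proof. by rewrite /pvert /= gt_eqF ?Lpos // eqxx. Qed.

Lemma pv_some (e : E) x v : pvert (e, x) = Some v ->
  (x = 0 /\ src e = v) \/ (x = L e /\ tgt e = v).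
Proof.
rewrite /pvert /=; case: eqP => [-> [<-]|_]; first by left.
by case: eqP => [-> [<-]|//]; right.
Qed.

Lemma valid0 (e : E) : valid (e, 0).
Proof. by rewrite /valid /= lexx ltW ?Lpos. Qed.
Lemma validL (e : E) : valid (e, L e).
Proof. by rewrite /valid /= lexx ltW ?Lpos. Qed.
Lemma validP (e : E) x : valid (e, x) <-> 0 <= x <= L e.
Proof. by []. Qed.

Lemma peq_refl (p : E * R) : valid p -> peq p p.
Proof. by move=> vp; split; [|split; [|left]]. Qed.

Lemma peq_sym (p : E * R) q : peq p q -> peq q p.
Proof.
move=> [vp [vq [->|[w [h1 h2]]]]]; split=> //; split=> //; first by left.
by right; exists w.
Qed.

Lemma peq_trans (p : E * R) q r : peq p q -> peq q r -> peq p r.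
Proof.
move=> [vp [vq H1]] [_ [vr H2]]; split=> //; split=> //.
case: H1 => [e1|[w [h1 h2]]]; first by rewrite e1.
case: H2 => [e2|[w' [h3 h4]]]; first by rewrite -e2; right; exists w.
by right; exists w; split => //; rewrite h4 -h3 h2.
Qed.

Lemma peq_valid (p : E * R) q : peq p q -> valid p /\ valid q.
Proof. by case=> [? [? _]]. Qed.

Lemma peq_intE (e : E) x q : 0 < x < L e -> peq (e, x) q -> q = (e, x).
Proof.
move=> xi [_ [_ [->//|[w [h1 _]]]]].
by rewrite pv_int in h1.
Qed.

Lemma peq_vert (p : E * R) q v : peq p q -> pvert p = Some v -> pvert q = Some v.
Proof. by move=> [_ [_ [<-//|[w [h1 h2]]]]]; rewrite h1 => -[<-]. Qed.

Lemma fval_peq (p : E * R) q : peq p q -> fval f p = fval f q.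
Proof. exact: F_cont. Qed.

Lemma pball_peq (p : E * R) q eps r : peq p q -> pball p eps r -> pball q eps r.
Proof.
move=> pq [e [x [y [h1 [h2 h3]]]]]; exists e, x, y; split => //.
exact: peq_trans (peq_sym pq) h1.
Qed.

Lemma nm_peq (p : E * R) q : peq p q -> neumann_pt f p -> neumann_pt f q.
Proof.
move=> pq [H1 H2]; split.
  have fq := fval_peq pq.
  have [_ vq] := peq_valid pq.
  case: H1 => [[_ [eps [e0 Hm]]]|[_ [eps [e0 Hm]]]]; [left|right]; split => //;
    exists eps; split => // r /(pball_peq (peq_sym pq)) /Hm; by rewrite fq.
move=> [vq [v [hv dv]]]; apply: H2; split; first exact: (peq_valid pq).1.
exists v; split => //; exact: peq_vert (peq_sym pq) hv.
Qed.

Lemma off_peq (p : E * R) q : peq p q -> off_neumann f p -> off_neumann f q.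
Proof.
move=> pq [vp np]; split; first exact: (peq_valid pq).2.
by move=> /(nm_peq (peq_sym pq)).
Qed.

Lemma crit_nm (e : E) x : 0 < x < L e -> h e x = 0 -> neumann_pt f (e, x).
Proof.
move=> xi hx.
have fx0 : f e x != 0 by apply/eqP => fx; exact: (ND (conj fx hx)).
have ext := u_ext kpos (F_ode e) hx.
have vx : valid (e, x) by move: xi => /andP[a b]; rewrite /valid /= ltW // ltW.
have key q eps : pball (e, x) eps q -> exists y, fval f q = f e y.
  move=> [e' [x' [y [h1 [h2 _]]]]].
  move: (peq_intE xi h1) => [E1 _]; subst e'.
  by exists y; rewrite (fval_peq h2).
split; last by move=> [_ [w [hw _]]]; rewrite pv_int in hw.
have cle y : cos (k * (y - x)) <= 1 by apply: cos_le1.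
case: (ltgtP 0 (f e x)) => [fp|fn|f0]; last by move: fx0; rewrite -f0 eqxx.
- left; split => //; exists 1; split => // q /key [y ->]; rewrite ext /fval /=.
  have := cle y; nra.
- right; split => //; exists 1; split => // q /key [y ->]; rewrite ext /fval /=.
  have := cle y; nra.
Qed.

Lemma small3 (a b c : R) : 0 < a -> 0 < b -> 0 < c ->
  exists d, [/\ 0 < d, d <= a, d <= b & d <= c].
Proof.
move=> a0 b0 c0; exists (Num.min a (Num.min b c)); split.
- by rewrite !lt_min a0 b0 c0.
- by rewrite ge_min lexx.
- by rewrite !ge_min lexx orbT.
- by rewrite !ge_min lexx !orbT.
Qed.

Lemma noncrit_nnm (e : E) x : 0 < x < L e -> h e x != 0 -> ~ neumann_pt f (e, x).
Proof.
move=> xi hx [H _]; apply: (negP hx); apply/eqP.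
have vx : valid (e, x) by move: xi => /andP[a b]; rewrite /valid /= ltW // ltW.
have dg := (F_ode e x).1.
have inb eps y : 0 < eps -> `|y - x| < eps -> 0 <= y <= L e -> pball (e, x) eps (e, y).
  move=> e0 yx yv; exists e, x, y; split; first exact: peq_refl.
  by split => //; apply: peq_refl.
move: xi => /andP[x0 xl].
have lx : 0 < L e - x by lra.
case: H => [[_ [eps [e0 Hm]]]|[_ [eps [e0 Hm]]]];
  have [d [d0 de dx dl]] := small3 e0 x0 lx.
- apply/eqP; rewrite eq_le; apply/andP; split.
    apply: (der_right_max d0 dg) => y /andP[y1 y2]; apply: (Hm (e, y)).
    apply: inb => //; last by apply/andP; split; lra.
    rewrite gtr0_norm; lra.
  apply: (der_left_max d0 dg) => y /andP[y1 y2]; apply: (Hm (e, y)).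
  apply: inb => //; last by apply/andP; split; lra.
  rewrite ltr0_norm; lra.
- apply/eqP; rewrite eq_le; apply/andP; split.
    apply: (der_left_min d0 dg) => y /andP[y1 y2]; apply: (Hm (e, y)).
    apply: inb => //; last by apply/andP; split; lra.
    rewrite ltr0_norm; lra.
  apply: (der_right_min d0 dg) => y /andP[y1 y2]; apply: (Hm (e, y)).
  apply: inb => //; last by apply/andP; split; lra.
  rewrite gtr0_norm; lra.
Qed.

Lemma off_int (e : E) x : 0 < x < L e -> h e x != 0 -> off_neumann f (e, x).
Proof.
move=> xi hx; split; last exact: noncrit_nnm.
by move: xi => /andP[a b]; rewrite /valid /= ltW // ltW.
Qed.


Lemma pball_vert (p : E * R) v eps (e : E) x y : valid p -> pvert p = Some v ->
  pvert (e, x) = Some v -> valid (e, x) -> 0 <= y <= L e -> `|y - x| < eps ->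
  pball p eps (e, y).
Proof.
move=> vp pv ev vx vy yx; exists e, x, y; split.
  split => //; split => //; right; by exists v.
by split => //; apply: peq_refl.
Qed.

Lemma vert_sign (p : E * R) v (s : R) : pvert p = Some v -> (s = 1 \/ s = -1) ->
  valid p -> (exists eps, 0 < eps /\ forall q, pball p eps q -> s * fval f q <= s * fval f p) ->
  forall hh, half_at v hh -> s * outder f hh <= 0.
Proof.
move=> pv hs vp [eps [e0 Hm]] [e b]; rewrite /half_at /outder /=.
have [d [d0 de dl _]] := small3 e0 (Lpos e) (Lpos e).
have dg0 := (F_ode e 0).1; have dgL := (F_ode e (L e)).1.
case: b => /eqP ev.
- have Hy y : 0 < y < 0 + d -> s * f e y <= s * f e 0.
    move=> /andP[y1 y2].
    have pe : peq p (e, 0).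
      split => //; split; first exact: valid0.
      by right; exists v; rewrite pv0 ev.
    have -> : f e (0) = fval f p by rewrite (fval_peq pe).
    have -> : f e y = fval f (e, y) by [].
    apply: (Hm (e, y)); apply: (pball_vert vp pv _ (valid0 e)).
    - by rewrite pv0 ev.
    - apply/andP; split; lra.
    - rewrite subr0 gtr0_norm; lra.
  case: hs => hs; subst s.
  + rewrite mul1r; apply: (der_right_max d0 dg0) => y /Hy; by rewrite !mul1r.
  + rewrite mulN1r oppr_le0; apply: (der_right_min d0 dg0) => y /Hy.
    by rewrite !mulN1r lerN2.
- have Hy y : L e - d < y < L e -> s * f e y <= s * f e (L e).
    move=> /andP[y1 y2].
    have pe : peq p (e, L e).
      split => //; split; first exact: validL.
      by right; exists v; rewrite pvL ev.
    have -> : f e (L e) = fval f p by rewrite (fval_peq pe).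
    have -> : f e y = fval f (e, y) by [].
    apply: (Hm (e, y)); apply: (pball_vert vp pv _ (validL e)).
    - by rewrite pvL ev.
    - apply/andP; split; lra.
    - rewrite ltr0_norm; lra.
  case: hs => hs; subst s.
  + rewrite mul1r oppr_le0; apply: (der_left_max d0 dgL) => y /Hy; by rewrite !mul1r.
  + rewrite mulN1r opprK; apply: (der_left_min d0 dgL) => y /Hy.
    by rewrite !mulN1r lerN2.
Qed.

Lemma vert_ext (p : E * R) v : pvert p = Some v -> (local_max f p \/ local_min f p) ->
  forall hh, half_at v hh -> outder f hh = 0.
Proof.
move=> pv Hext.
have [s [hs H]] : exists s : R, (s = 1 \/ s = -1) /\ forall hh, half_at v hh -> s * outder f hh <= 0.
  case: Hext => [[vp [eps [e0 Hm]]]|[vp [eps [e0 Hm]]]].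
  - exists 1; split; first by left.
    apply: vert_sign pv _ vp _; first by left.
    by exists eps; split => // q /Hm; rewrite !mul1r.
  - exists (-1); split; first by right.
    apply: vert_sign pv _ vp _; first by right.
    by exists eps; split => // q /Hm; rewrite !mulN1r lerN2.
have S0 : \sum_(hh | half_at v hh) (- (s * outder f hh)) == 0.
  by rewrite sumrN -mulr_sumr F_kir mulr0 oppr0.
have pos : forall i, half_at v i -> 0 <= - (s * outder f i).
  by move=> i hi; rewrite oppr_ge0; apply: H.
move=> hh hv.
have := (psumr_eq0P pos (eqP S0)) hh hv.
move/eqP; rewrite oppr_eq0 mulf_eq0 => /orP[/eqP s0|/eqP //].
by case: hs s0 => ->; [move/eqP; rewrite oner_eq0 | move/eqP; rewrite oppr_eq0 oner_eq0].
Qed.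


Lemma deg_pos v (hh : E * bool) : half_at v hh -> (0 < deg v)%N.
Proof. by move=> hv; rewrite /deg; apply/card_gt0P; exists hh; rewrite in_setE. Qed.

Lemma deg1_uniq v (h1 h2 : E * bool) : deg v = 1%N -> half_at v h1 -> half_at v h2 -> h1 = h2.
Proof.
rewrite /deg => d a1 a2.
have [x0 Ex] := mem_card1 d.
have m1 : h1 \in [set hh : E * bool | half_at v hh]%classic by rewrite in_setE.
have m2 : h2 \in [set hh : E * bool | half_at v hh]%classic by rewrite in_setE.
by rewrite Ex in m1; rewrite Ex in m2; rewrite (eqP m1) (eqP m2).
Qed.

Lemma deg1_kir v (hh : E * bool) : deg v = 1%N -> half_at v hh -> outder f hh = 0.
Proof.
move=> d1 hv; rewrite -(F_kir v) (big_pred1 hh) //.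
move=> j; apply/idP/eqP => [hj|->//]; exact: deg1_uniq d1 hj hv.
Qed.

Lemma vert_half (e : E) x v : pvert (e, x) = Some v ->
  exists b, half_at v (e, b) /\ x = (if b then 0 else L e).
Proof.
case/pv_some => [[-> <-]|[-> <-]]; [exists true|exists false]; by rewrite /half_at /= eqxx.
Qed.

Lemma deg_le2 v (hh : E * bool) : (deg v <= 2)%N -> half_at v hh -> deg v = 1%N.
Proof.
move=> d2 hv; have := deg_pos hv; case: Hstd => _ [_ [Hd _]]; have := Hd v.
by case: (deg v) d2 => [|[|[|]]].
Qed.

Lemma betwE (x y z : R) : (Num.min x y <= z <= Num.max x y) =
  ((x <= z) || (y <= z)) && ((z <= x) || (z <= y)).
Proof. by rewrite ge_min le_max. Qed.

Lemma pconn_l (S : E * R -> Prop) p q : pconn S p q -> S p.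
Proof.
elim => [e x y Hs|p' q' Sp _ //|p' q' r' _ H _ _ //].
by apply: Hs; rewrite betwE !lexx.
Qed.

Lemma pconn_r (S : E * R -> Prop) p q : (forall a b, peq a b -> S a -> S b) ->
  pconn S p q -> S q.
Proof.
move=> Sinv; elim => [e x y Hs|p' q' Sp pq|p' q' r' _ _ _ H //].
  by apply: Hs; rewrite betwE !lexx !orbT.
exact: Sinv pq Sp.
Qed.

Lemma pconn_sym (S : E * R -> Prop) p q : (forall a b, peq a b -> S a -> S b) ->
  pconn S p q -> pconn S q p.
Proof.
move=> Sinv; elim => [e x y Hs|p' q' Sp pq|p' q' r' _ H1 _ H2].
- by apply: pconn_seg => z; rewrite minC maxC; apply: Hs.
- exact: pconn_peq (Sinv _ _ pq Sp) (peq_sym pq).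
- exact: pconn_trans H2 H1.
Qed.

Lemma off_inv (a b : E * R) : peq a b -> off_neumann f a -> off_neumann f b.
Proof. exact: off_peq. Qed.

Lemma hpt_split (hh : E * bool) t : hpt hh t = (hh.1, (hpt hh t).2).
Proof. by case: hh => e []. Qed.

Lemma hpt_int (hh : E * bool) t : 0 < t < L hh.1 -> 0 < (hpt hh t).2 < L hh.1.
Proof. case: hh => e [] /= /andP[a b]; apply/andP; split; lra. Qed.

Lemma lfun_ex : exists l : E * bool -> R, forall hh, [/\ 0 < l hh <= pi / k,
  h hh.1 (hpt hh (l hh)).2 = 0 &
  forall t, 0 < t < l hh -> h hh.1 (hpt hh t).2 != 0].
Proof.
suff [l Hl] : {l : E * bool -> R & forall hh, [/\ 0 < l hh <= pi / k,
  h hh.1 (hpt hh (l hh)).2 = 0 &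
  forall t, 0 < t < l hh -> h hh.1 (hpt hh t).2 != 0]} by exists l.
apply: (choice (P := fun hh l => [/\ 0 < l <= pi / k,
  h hh.1 (hpt hh l).2 = 0 &
  forall t, 0 < t < l -> h hh.1 (hpt hh t).2 != 0])) => -[e []] /=.
- have [l [l0 hl nz]] := u'_fwd kpos (@F_ode e) (@ND e) 0.
  exists l; split => //; first by rewrite -(add0r l).
  by move=> t /nz; rewrite add0r.
- have [l [l0 hl nz]] := u'_bwd kpos (@F_ode e) (@ND e) (L e).
  by exists l; split.
Qed.


Section Star.
Variables (C : E * R -> Prop) (v : V) (p0 : E * R) (l : E * bool -> R).
Hypothesis HCq : forall q, C q <-> pconn (off_neumann f) p0 q.
Hypothesis Hvp0 : valid p0.
Hypothesis Hpv0 : pvert p0 = Some v.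
Hypothesis Hoff0 : off_neumann f p0.
Hypothesis Hl : forall hh, [/\ 0 < l hh <= pi / k,
  h hh.1 (hpt hh (l hh)).2 = 0 &
  forall t, 0 < t < l hh -> h hh.1 (hpt hh t).2 != 0].

Lemma l_pos hh : 0 < l hh. Proof. by case: (Hl hh) => /andP[]. Qed.
Lemma l_lt hh : l hh < L hh.1.
Proof. case: (Hl hh) => /andP[_ a] _ _; exact: le_lt_trans a (c_lt _). Qed.

Lemma nm_end hh : neumann_pt f (hpt hh (l hh)).
Proof.
rewrite hpt_split; apply: crit_nm; last by case: (Hl hh).
apply: hpt_int; by rewrite l_pos l_lt.
Qed.

Lemma nnm_in hh t : 0 < t < l hh -> ~ neumann_pt f (hpt hh t).
Proof.
move=> /andP[t0 tl]; rewrite hpt_split; apply: noncrit_nnm; last by case: (Hl hh) => _ _; apply; rewrite t0.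
apply: hpt_int; rewrite t0 /=; exact: lt_trans tl (l_lt _).
Qed.

Definition Pos (e : E) x := (src e = v /\ 0 <= x < l (e, true)) \/
   (tgt e = v /\ L e - l (e, false) < x <= L e).

Lemma pe0 (e : E) : src e = v -> peq p0 (e, 0).
Proof. by move=> ev; split => //; split; [exact: valid0|right; exists v; rewrite pv0 ev]. Qed.
Lemma peL (e : E) : tgt e = v -> peq p0 (e, L e).
Proof. by move=> ev; split => //; split; [exact: validL|right; exists v; rewrite pvL ev]. Qed.

Lemma Pos_off (e : E) x : Pos e x -> off_neumann f (e, x).
Proof.
have l1 := l_lt (e, true); have l2 := l_lt (e, false); rewrite /= in l1 l2.
case: (Hl (e, true)) => _ _ nz1; case: (Hl (e, false)) => _ _ nz2.
rewrite /= in nz1 nz2.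
case=> [[ev /andP[x0 xl]]|[ev /andP[x0 xl]]].
- case: (eqVneq x 0) => [->|xn0]; first exact: off_peq (pe0 ev) Hoff0.
  apply: off_int; first by apply/andP; split; lra.
  apply: nz1; apply/andP; split; lra.
- case: (eqVneq x (L e)) => [->|xn0]; first exact: off_peq (peL ev) Hoff0.
  apply: off_int; first by apply/andP; split; lra.
  have := nz2 (L e - x); rewrite (_ : L e - (L e - x) = x); last by rewrite opprB addrC subrK.
  apply; apply/andP; split; lra.
Qed.

Lemma Pos_reach (e : E) x : Pos e x -> pconn (off_neumann f) p0 (e, x).
Proof.
have l1 := l_lt (e, true); have l2 := l_lt (e, false); rewrite /= in l1 l2.
case=> [[ev /andP[x0 xl]]|[ev /andP[x0 xl]]].
- apply: (pconn_trans (pconn_peq Hoff0 (pe0 ev))).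
  apply: pconn_seg => z; rewrite betwE => /andP[/orP[a|a] /orP[b|b]];
    apply: Pos_off; left; split => //; apply/andP; split; lra.
- apply: (pconn_trans (pconn_peq Hoff0 (peL ev))).
  apply: pconn_seg => z; rewrite betwE => /andP[/orP[a|a] /orP[b|b]];
    apply: Pos_off; right; split => //; apply/andP; split; lra.
Qed.

Lemma Pos_vert (e : E) x w : Pos e x -> pvert (e, x) = Some w -> w = v.
Proof.
have l1 := l_lt (e, true); have l2 := l_lt (e, false); rewrite /= in l1 l2.
move=> P /pv_some [[x0 ew]|[xL ew]]; case: P => [[ev /andP[a b]]|[ev /andP[a b]]];
  first [by rewrite -ew | exfalso; lra].
Qed.

Lemma Pos_peq (e1 : E) x1 (e : E) x : peq (e1, x1) (e, x) -> Pos e x -> Pos e1 x1.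
Proof.
move=> [_ [_ [[-> ->]//|[w [h1 h2]]]]] P.
have wv := Pos_vert P h2; subst w.
have l1 := l_pos (e1, true); have l2 := l_pos (e1, false); rewrite /= in l1 l2.
have L1 := Lpos e1.
case/pv_some: h1 => [[x0 ev]|[xL ev]].
- by left; split => //; rewrite x0 lexx.
- by right; split => //; rewrite xL lexx andbT; lra.
Qed.

Lemma Pos_seg (e : E) x y : Pos e x ->
  (forall z, Num.min x y <= z <= Num.max x y -> off_neumann f (e, z)) -> Pos e y.
Proof.
have l1 := l_lt (e, true); have l2 := l_lt (e, false); rewrite /= in l1 l2.
have p1 := l_pos (e, true); have p2 := l_pos (e, false); rewrite /= in p1 p2.
move=> P Hs.
have yb : Num.min x y <= y <= Num.max x y by rewrite betwE !lexx !orbT.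
have [/validP /andP[y0 yL] _] := Hs y yb.
case: P => [[ev /andP[a b]]|[ev /andP[a b]]].
- left; split => //; apply/andP; split => //; rewrite ltNge; apply/negP => yl.
  have := Hs (l (e, true)); rewrite betwE.
  have -> : (x <= l (e, true)) || (y <= l (e, true)) by rewrite ltW.
  rewrite yl orbT /= => /(_ isT) [_]; apply.
  have := nm_end (e, true); by [].
- right; split => //; apply/andP; split => //; rewrite ltNge; apply/negP => yl.
  have := Hs (L e - l (e, false)); rewrite betwE.
  have -> : (x <= L e - l (e, false)) || (y <= L e - l (e, false)) by rewrite yl orbT.
  rewrite ltW //= => /(_ isT) [_]; apply.
  have := nm_end (e, false); by [].
Qed.

Definition J q := exists (e : E) x, peq q (e, x) /\ Pos e x.

Lemma J_pres p q : pconn (off_neumann f) p q -> J p -> J q.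
Proof.
elim => [e1 x y Hs|p' q' Sp pq|p' q' r' _ H1 _ H2].
- move=> [e [x' [pe P]]]; exists e1, y; split.
    have yb : Num.min x y <= y <= Num.max x y by rewrite betwE !lexx !orbT.
    apply: peq_refl; exact: (Hs y yb).1.
  apply: Pos_seg (Pos_peq pe P) Hs.
- move=> [e [x' [pe P]]]; exists e, x'; split => //.
  exact: peq_trans (peq_sym pq) pe.
- by move=> /H1 /H2.
Qed.

Definition RHS q := (valid q /\ pvert q = Some v) \/
  exists hh t, half_at v hh /\ 0 < t <= l hh /\ peq q (hpt hh t) /\ ~ neumann_pt f (hpt hh t).

Lemma J_p0 : J p0.
Proof.
case: p0 Hvp0 Hpv0 => e x vp pv; exists e, x; split; first exact: peq_refl.
have l1 := l_pos (e, true); have l2 := l_pos (e, false); rewrite /= in l1 l2.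
case/pv_some: pv => [[x0 ev]|[xL ev]].
- by left; split => //; rewrite x0 lexx.
- by right; split => //; rewrite xL lexx andbT; lra.
Qed.

Lemma RHS_J q : RHS q -> J q.
Proof.
case=> [[vq pq]|[[e b] [t [hv [/andP[t0 tl] [pq nn]]]]]].
- move: vq pq; case: q => e x vq pq; exists e, x; split; first exact: peq_refl.
  have l1 := l_pos (e, true); have l2 := l_pos (e, false); rewrite /= in l1 l2.
  case/pv_some: pq => [[x0 ev]|[xL ev]].
  + by left; split => //; rewrite x0 lexx.
  + by right; split => //; rewrite xL lexx andbT; lra.
- have tl' : t < l (e, b).
    rewrite lt_def tl andbT; apply/eqP => et; apply: nn; rewrite -et; exact: nm_end.
  have lL := l_lt (e, b); rewrite /= in lL.
  move: hv pq nn; case: b tl tl' lL => tl tl' lL /eqP ev pq nn /=.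
  + exists e, t; split => //; left; split => //; apply/andP; split; lra.
  + exists e, (L e - t); split => //; right; split => //; apply/andP; split; lra.
Qed.

Lemma J_RHS q : J q -> RHS q.
Proof.
move=> [e [x [pq P]]].
have [vq _] := peq_valid pq.
have l1 := l_lt (e, true); have l2 := l_lt (e, false); rewrite /= in l1 l2.
case: P => [[ev /andP[x0 xl]]|[ev /andP[x0 xl]]].
- case: (eqVneq x 0) => [ex|xn0].
    left; split => //; apply: peq_vert (peq_sym pq) _; by rewrite ex pv0 ev.
  right; exists (e, true), x; split; first by rewrite /half_at /= ev.
  split; first by rewrite ltW // andbT; lra.
  split => //; apply: nnm_in; apply/andP; split => //; lra.
- case: (eqVneq x (L e)) => [ex|xn0].
    left; split => //; apply: peq_vert (peq_sym pq) _; by rewrite ex pvL ev.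
  right; exists (e, false), (L e - x); split; first by rewrite /half_at /= ev.
  split; first by apply/andP; split; lra.
  have E1 : hpt (e, false) (L e - x) = (e, x).
    by rewrite /hpt /= opprB addrC subrK.
  rewrite E1; split => //; rewrite -E1; apply: nnm_in; apply/andP; split; lra.
Qed.

Lemma star_main : star_domain f C v.
Proof.
exists l; split; [|split].
- move=> hh hv; split; first by rewrite l_pos ltW ?l_lt.
  split; [exact: nnm_in | left; exact: nm_end].
- move=> e _ _; rewrite leNgt; apply/negP => H.
  case: (Hl (e, true)) => _ _ nz1; case: (Hl (e, false)) => _ z2 _.
  have l2 := l_lt (e, false); have p2 := l_pos (e, false); rewrite /= in l2 p2 nz1 z2.
  have tin : 0 < L e - l (e, false) < l (e, true) by apply/andP; split; lra.
  by move: (nz1 _ tin); rewrite z2 eqxx.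
- move=> q; split => [Cq|Rq].
  + apply: J_RHS; apply: (J_pres ((HCq q).1 Cq)); exact: J_p0.
  + apply/HCq; have [e [x [pq P]]] := RHS_J Rq.
    exact: pconn_trans (Pos_reach P) (pconn_peq (Pos_off P) (peq_sym pq)).
Qed.

End Star.

Section Path.
Variables (C : E * R -> Prop) (p0 : E * R).
Hypothesis HCq : forall q, C q <-> pconn (off_neumann f) p0 q.
Hypothesis Hoff0 : off_neumann f p0.
Hypothesis Hdeg : forall w : V, contains_vertex C w -> (deg w <= 2)%N.

Lemma C_off q : C q -> off_neumann f q.
Proof. by move=> /HCq; apply: pconn_r; apply: off_inv. Qed.

Lemma C_deg1 (e1 : E) x w : C (e1, x) -> pvert (e1, x) = Some w -> deg w = 1%N.
Proof.
move=> Cq pv; have [b [hb _]] := vert_half pv.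
apply: (deg_le2 (hh := (e1, b))) => //; apply: Hdeg.
by exists (e1, x); split => //; split => //; case: (C_off Cq).
Qed.

Lemma C_h0 (e : E) : C (e, 0) -> h e 0 = 0.
Proof.
move=> Cq; have d1 := C_deg1 Cq (pv0 e).
by have := deg1_kir d1 (_ : half_at (src e) (e, true)); rewrite /outder /=; apply; rewrite /half_at /=.
Qed.

Lemma C_hL (e : E) : C (e, L e) -> h e (L e) = 0.
Proof.
move=> Cq; have d1 := C_deg1 Cq (pvL e).
have := deg1_kir d1 (_ : half_at (tgt e) (e, false)); rewrite /outder /=.
by move=> /(_ _) /eqP; rewrite oppr_eq0 => /(_ _) /eqP; apply; rewrite /half_at /=.
Qed.

Lemma nm_h0 (e : E) : neumann_pt f (e, 0) -> h e 0 = 0.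
Proof.
move=> [H _]; have := vert_ext (pv0 e) H (_ : half_at (src e) (e, true)).
by rewrite /outder /=; apply; rewrite /half_at /=.
Qed.

Lemma nm_hL (e : E) : neumann_pt f (e, L e) -> h e (L e) = 0.
Proof.
move=> [H _]; have := vert_ext (pvL e) H (_ : half_at (tgt e) (e, false)).
rewrite /outder /= => /(_ _) /eqP; rewrite oppr_eq0 => /(_ _) /eqP; apply.
by rewrite /half_at /=.
Qed.

Lemma C_int : exists (e : E) x1, [/\ 0 < x1 < L e, h e x1 != 0 & C (e, x1)].
Proof.
have Cp0 : C p0 by apply/HCq; apply: pconn_peq Hoff0 _; apply: peq_refl; case: Hoff0.
case: p0 HCq Hoff0 Cp0 => e x0 HC off0 Cp0.
have [/validP /andP[a b] nn0] := off0.
have L0 := Lpos e; have cL := c_lt e; have c0 := c_pos.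
case: (eqVneq x0 0) => [ex0|nx0].
  have [l [/andP[l0 lc] _ nz]] := u'_fwd kpos (@F_ode e) (@ND e) 0.
  exists e, (l / 2); split; [apply/andP; split; lra| |].
    by have := nz (l / 2); rewrite add0r; apply; apply/andP; split; lra.
  apply/HC; apply: pconn_seg => z; rewrite betwE ex0 => /andP[/orP[z1|z1] /orP[z2|z2]].
  - have -> : z = 0 by apply/eqP; rewrite eq_le z1; lra.
    by rewrite -ex0.
  - case: (eqVneq z 0) => [->|zn0]; first by rewrite -ex0.
    apply: off_int; first by apply/andP; split; lra.
    have := nz z; rewrite add0r; apply; apply/andP; split; lra.
  - lra.
  - have -> : z = l / 2 by apply/eqP; rewrite eq_le z1 z2.
    apply: off_int; first by apply/andP; split; lra.
    by have := nz (l / 2); rewrite add0r; apply; apply/andP; split; lra.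
case: (eqVneq x0 (L e)) => [ex0|nxL].
  have [l [/andP[l0 lc] _ nz]] := u'_bwd kpos (@F_ode e) (@ND e) (L e).
  exists e, (L e - l / 2); split; [apply/andP; split; lra| |].
    by apply: nz; apply/andP; split; lra.
  apply/HC; apply: pconn_seg => z; rewrite betwE ex0 => /andP[/orP[z1|z1] /orP[z2|z2]].
  - have -> : z = L e by apply/eqP; rewrite eq_le z1 z2.
    by rewrite -ex0.
  - lra.
  - case: (eqVneq z (L e)) => [->|zn0]; first by rewrite -ex0.
    apply: off_int; first by apply/andP; split; lra.
    have := nz (L e - z); rewrite (_ : L e - (L e - z) = z); last by rewrite opprB addrC subrK.
    apply; apply/andP; split; lra.
  - have -> : z = L e - l / 2 by apply/eqP; rewrite eq_le z1 z2.
    apply: off_int; first by apply/andP; split; lra.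
    by apply: nz; apply/andP; split; lra.
have xi : 0 < x0 < L e.
  apply/andP; split; rewrite lt_def; first by rewrite nx0 a.
  by rewrite eq_sym nxL b.
exists e, x0; split => //.
by apply/eqP => hx; apply: nn0; apply: crit_nm.
Qed.

Lemma path_main : path_domain f C (pi / k).
Proof.
have [e [x1 [Hx1 Hh1 HC1]]] := C_int.
have L0 := Lpos e; have cL := c_lt e; have c0 := c_pos.
move: Hx1 => /andP[x10 x1L].
have [l [/andP[l0 lc] hl _]] := u'_bwd kpos (@F_ode e) (@ND e) x1.
have [hb nzab] := u'_next kpos (@F_ode e) (@ND e) hl.
move: hl hb nzab; set a0 := x1 - l; set b0 := a0 + pi / k => hl hb nzab.
have nz z : a0 < z < b0 -> h e z != 0.
  move=> /andP[z1 z2]; have := nzab (z - a0).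
  rewrite (_ : a0 + (z - a0) = z); last by rewrite addrC subrK.
  apply; apply/andP; split; rewrite /b0 in z2; lra.
have ax1 : a0 < x1 by rewrite /a0; lra.
have x1b : x1 < b0.
  rewrite lt_def; apply/andP; split.
    by apply/eqP => eb; move: Hh1; rewrite -eb hb eqxx.
  rewrite /b0 /a0; lra.
have reach y : off_neumann f (e, y) ->
    (forall z, Num.min x1 y <= z <= Num.max x1 y -> z != y -> 0 < z < L e /\ a0 < z < b0) ->
    C (e, y).
  move=> oy Hz; apply/HCq; apply: pconn_trans ((HCq _).1 HC1) _.
  apply: pconn_seg => z hz; case: (eqVneq z y) => [->//|zy].
  have [zi zab] := Hz z hz zy; exact: off_int zi (nz z zab).
have a0p : 0 <= a0.
  rewrite leNgt; apply/negP => an.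
  have h0 : h e 0 != 0 by apply: nz; apply/andP; split; lra.
  case: (EM (neumann_pt f (e, 0))) => [N|N]; first by rewrite (nm_h0 N) eqxx in h0.
  have C0 : C (e, 0).
    apply: reach; first by split; [exact: valid0|exact: N].
    move=> z hz zy; split.
      + apply: (betw_ne _ _ hz zy); apply/andP; split; lra.
      + apply: (betw_ne _ _ hz zy); apply/andP; split; lra.
  by rewrite (C_h0 C0) eqxx in h0.
have b0L : b0 <= L e.
  rewrite leNgt; apply/negP => bn.
  have h0 : h e (L e) != 0 by apply: nz; apply/andP; split; lra.
  case: (EM (neumann_pt f (e, L e))) => [N|N]; first by rewrite (nm_hL N) eqxx in h0.
  have C0 : C (e, L e).
    apply: reach; first by split; [exact: validL|exact: N].
    move=> z hz zy; split.
      + apply: (betw_ne _ _ hz zy); apply/andP; split; lra.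
      + apply: (betw_ne _ _ hz zy); apply/andP; split; lra.
  by rewrite (C_hL C0) eqxx in h0.
have endA : neumann_pt f (e, a0) \/ deg1_vertex_pt (e, a0).
  case: (eqVneq a0 0) => [a00|an0].
    case: (EM (neumann_pt f (e, a0))) => [N|N]; first by left.
    right; rewrite a00 in N *.
    have C0 : C (e, 0).
      apply: reach; first by split; [exact: valid0|exact: N].
      move=> z hz zy; split.
      + apply: (betw_ne _ _ hz zy); apply/andP; split; lra.
      + apply: (betw_ne _ _ hz zy); apply/andP; split; lra.
    split; first exact: valid0.
    by exists (src e); split; [exact: pv0|exact: (C_deg1 C0 (pv0 e))].
  left; apply: crit_nm hl; apply/andP; split; last lra.
  by rewrite lt_def an0 a0p.
have endB : neumann_pt f (e, b0) \/ deg1_vertex_pt (e, b0).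
  case: (eqVneq b0 (L e)) => [b0L'|bn0].
    case: (EM (neumann_pt f (e, b0))) => [N|N]; first by left.
    right; rewrite b0L' in N *.
    have C0 : C (e, L e).
      apply: reach; first by split; [exact: validL|exact: N].
      move=> z hz zy; split.
      + apply: (betw_ne _ _ hz zy); apply/andP; split; lra.
      + apply: (betw_ne _ _ hz zy); apply/andP; split; lra.
    split; first exact: validL.
    by exists (tgt e); split; [exact: pvL|exact: (C_deg1 C0 (pvL e))].
  left; apply: crit_nm hb; apply/andP; split; first lra.
  by rewrite lt_def eq_sym bn0 b0L.
have inner y : a0 < y < b0 -> ~ neumann_pt f (e, y).
  move=> yi; apply: noncrit_nnm; last exact: nz.
  move: yi => /andP[y1 y2]; apply/andP; split; lra.
pose J2 q := exists y, a0 <= y <= b0 /\ peq q (e, y) /\ ~ neumann_pt f (e, y).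
have J2pres p q : pconn (off_neumann f) p q -> C p -> J2 p -> J2 q.
  elim => [e1 x y Hs|p' q' Sp pq|p' q' r' P1 IH1 P2 IH2].
  - move=> Cx [y0 [/andP[ya yb] [pe nn]]].
    have [E1 X1] : e1 = e /\ x = y0.
      case: pe => _ [_ [[-> ->] // | [w [h1 h2]]]].
      have d1 := C_deg1 Cx h1.
      have [b1 [hb1 xb1]] := vert_half h1; have [b2 [hb2 yb2]] := vert_half h2.
      move: (deg1_uniq d1 hb1 hb2) => [E1 B1]; subst e1 b2.
      by split => //; rewrite xb1 yb2.
    subst e1 x.
    have yy : Num.min y0 y <= y <= Num.max y0 y by rewrite betwE !lexx !orbT.
    have [/validP /andP[y0' yL] nny] := Hs y yy.
    have yab : a0 <= y <= b0.
      apply/andP; split; rewrite leNgt; apply/negP => H.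
      - have hz : Num.min y0 y <= a0 <= Num.max y0 y.
          by rewrite betwE; apply/andP; split; apply/orP; [right|left]; lra.
        have [_ na] := Hs a0 hz; apply: na; apply: crit_nm hl; apply/andP; split; lra.
      - have hz : Num.min y0 y <= b0 <= Num.max y0 y.
          by rewrite betwE; apply/andP; split; apply/orP; [left|right]; lra.
        have [_ na] := Hs b0 hz; apply: na; apply: crit_nm hb; apply/andP; split; lra.
    exists y; split => //; split => //; apply: peq_refl; apply/validP; apply/andP; split; lra.
  - move=> _ [y [yb [pe nn]]]; exists y; split => //; split => //.
    exact: peq_trans (peq_sym pq) pe.
  - move=> Cp Jp; have Jq := IH1 Cp Jp.
    apply: IH2 Jq; apply/HCq; exact: pconn_trans ((HCq _).1 Cp) P1.
exists e, a0, b0; split => //; split; first lra.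
split => //; split; first by rewrite /b0 addrC addKr.
split => //; split => //; split => //.
move=> q; split => [Cq|[y [/andP[ya yb] [pq nn]]]].
  have J1 : J2 (e, x1).
    exists x1; split; first by apply/andP; split; lra.
    split; [apply: peq_refl; apply/validP; apply/andP; split; lra|].
    apply: inner; apply/andP; split; lra.
  apply: (J2pres (e, x1)) => //.
  apply: pconn_trans (pconn_sym off_inv ((HCq _).1 HC1)) ((HCq q).1 Cq).
have oy : off_neumann f (e, y) by split => //; apply/validP; apply/andP; split; lra.
have Cy : C (e, y).
  apply: (reach y oy) => z hz zy; split.
  + apply: (betw_ne _ _ hz zy); apply/andP; split; lra.
  + apply: (betw_ne _ _ hz zy); apply/andP; split; lra.
apply/HCq; apply: pconn_trans ((HCq _).1 Cy) (pconn_peq oy (peq_sym pq)).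
Qed.

End Path.

End Graph.

Unset Implicit Arguments.

Theorem lemma8p2 (R : realType) (G : metric_graph R) (f : edge G -> R -> R) (k : R)
  (C : edge G * R -> Prop) :
  standard_nontrivial G ->
  eigenfunction f k ->
  morse f ->
  pi / Lmin G < k ->
  neumann_component f C ->
  (forall v : vert G, contains_vertex C v -> (2 < deg v)%N -> star_domain f C v) /\
  ((forall v : vert G, contains_vertex C v -> (deg v <= 2)%N) ->
     path_domain f C (pi / k)).
Proof.
move=> Hstd Heig Hmorse Hk [[p0 Cp0] HC].
have HCq q : C q <-> pconn (off_neumann f) p0 q := HC p0 Cp0 q.
have Hoff0 : off_neumann f p0 := pconn_l ((HCq p0).1 Cp0).
split.
- move=> v [p [Cp [vp pv]]] _.
  have HCp q : C q <-> pconn (off_neumann f) p q := HC p Cp q.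
  have offp := pconn_l ((HCp p).1 Cp).
  have [l Hl] := lfun_ex Hstd Heig Hmorse Hk.
  by apply: (star_main Hstd Heig Hmorse Hk HCp vp pv offp Hl).
- move=> Hd.
  by apply: (path_main Hstd Heig Hmorse Hk HCq Hoff0 Hd).
Qed.
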